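(* For $n\ge0$ let $w_n$ be the number obtained by writing $n$ in base $2$ and reading the resulting string of digits in base $3$ (so if $n=\sum_j \epsilon_j2^j$ with $\epsilon_j\in\{0,1\}$, then $w_n=\sum_j\epsilon_j3^j$). If $\alpha$ is irrational, then $\alpha w_n\bmod 1$ is uniformly distributed on $[0,1)$. *)

(* Defs.v *)
From Stdlib Require Import Reals Lra Lia Arith List.
Open Scope R_scope.

(* w n: write n in base 2, read the digit string in base 3.
   n = sum_j eps_j 2^j  ==>  w n = sum_j eps_j 3^j.
   Bits of n beyond position n are all 0, so summing j = 0..n suffices. *)
Definition bin_to_tern (n : nat) : nat :=
  fold_right (fun j acc => ((if Nat.testbit n j then 3 ^ j else 0) + acc)%nat)
             0%nat (seq 0 (S n)).

Definition frac (x : R) : R := x - IZR (Int_part x).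

Definition in_Ico (a b x : R) : bool :=
  if Rle_dec a x then (if Rlt_dec x b then true else false) else false.

Definition count_in (u : nat -> R) (a b : R) (N : nat) : nat :=
  length (filter (fun n => in_Ico a b (u n)) (seq 0 N)).

Definition equidistributed_mod1 (u : nat -> R) : Prop :=
  forall a b : R, 0 <= a -> a <= b -> b <= 1 ->
    Un_cv (fun N => INR (count_in (fun n => frac (u n)) a b N) / INR N) (b - a).

Definition irrational (x : R) : Prop :=
  ~ exists p q : Z, q <> 0%Z /\ x = IZR p / IZR q.

(* Main.v *)
Require Import Defs.
From Stdlib Require Import Reals.
From Stdlib Require Import Lra Lia Arith List ZArith Classical.
Open Scope R_scope.

Definition T3 (n s L : nat) : nat :=
  fold_right (fun j acc => ((if Nat.testbit n j then 3 ^ j else 0) + acc)%nat) 0%nat (seq s L).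

Lemma fold_acc : forall n l c,
  fold_right (fun j acc => ((if Nat.testbit n j then 3 ^ j else 0) + acc)%nat) c l =
  (fold_right (fun j acc => ((if Nat.testbit n j then 3 ^ j else 0) + acc)%nat) 0 l + c)%nat.
Proof. induction l as [|x l IH]; intros c; simpl; [lia| rewrite IH; lia]. Qed.

Lemma T3_S : forall n L, T3 n 0 (S L) = (T3 n 0 L + if Nat.testbit n L then 3 ^ L else 0)%nat.
Proof.
  intros n L. unfold T3. rewrite seq_S, fold_right_app. simpl.
  rewrite fold_acc. lia.
Qed.

Lemma T3_stable : forall n L d, (n < 2 ^ L)%nat -> T3 n 0 (L + d) = T3 n 0 L.
Proof.
  intros n L d H. induction d as [|d IH].
  - now rewrite Nat.add_0_r.
  - rewrite Nat.add_succ_r, T3_S, IH.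
    destruct (Nat.eq_dec n 0) as [->|Hn].
    + rewrite Nat.bits_0. lia.
    + rewrite Nat.bits_above_log2; [lia|].
      assert (Nat.log2 n < L)%nat by (apply Nat.log2_lt_pow2; lia). lia.
Qed.

Lemma w_T3 : forall n L, (n < 2 ^ L)%nat -> bin_to_tern n = T3 n 0 L.
Proof.
  intros n L H. unfold bin_to_tern. fold (T3 n 0 (S n)).
  assert (H2 : (n < 2 ^ S n)%nat).
  { pose proof (Nat.pow_gt_lin_r 2 (S n)). lia. }
  destruct (Nat.le_ge_cases L (S n)) as [Hl|Hl].
  - replace (S n) with (L + (S n - L))%nat by lia. now rewrite T3_stable.
  - replace L with (S n + (L - S n))%nat by lia. now rewrite T3_stable.
Qed.

Lemma T3_shift : forall n b L s,
  T3 (2 * n + Nat.b2n b) (S s) L = (3 * T3 n s L)%nat.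
Proof.
  intros n b L. induction L as [|L IH]; intros s; [reflexivity|].
  unfold T3 in *. simpl seq. cbn [fold_right]. rewrite IH.
  rewrite Nat.testbit_succ_r. destruct (Nat.testbit n s); simpl; lia.
Qed.

Lemma w_double : forall n b, bin_to_tern (2 * n + Nat.b2n b) = (Nat.b2n b + 3 * bin_to_tern n)%nat.
Proof.
  intros n b.
  assert (H1 : (n < 2 ^ S n)%nat) by (pose proof (Nat.pow_gt_lin_r 2 (S n)); lia).
  rewrite (w_T3 n (S n)) by exact H1.
  rewrite (w_T3 _ (S (S n))).
  2:{ simpl Nat.pow in *. destruct b; simpl; lia. }
  change (T3 (2 * n + Nat.b2n b) 0 (S (S n))) with
    ((if Nat.testbit (2 * n + Nat.b2n b) 0 then 3 ^ 0 else 0) + T3 (2 * n + Nat.b2n b) 1 (S n))%nat.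
  rewrite T3_shift, Nat.testbit_0_r. destruct b; simpl; lia.
Qed.

Lemma w0 : bin_to_tern 0 = 0%nat.
Proof. reflexivity. Qed.

Lemma w_block : forall J q r, (r < 2 ^ J)%nat ->
  bin_to_tern (q * 2 ^ J + r) = (3 ^ J * bin_to_tern q + bin_to_tern r)%nat.
Proof.
  induction J as [|J IH]; intros q r Hr.
  - simpl in Hr. assert (r = 0%nat) by lia. subst. rewrite w0. replace (q * 2 ^ 0 + 0)%nat with q by (simpl; lia). simpl; lia.
  - destruct (Nat.Even_or_Odd r) as [[r' Hr']|[r' Hr']]; subst r.
    + replace (q * 2 ^ S J + 2 * r')%nat with (2 * (q * 2 ^ J + r') + Nat.b2n false)%nat
        by (rewrite Nat.pow_succ_r'; simpl Nat.b2n; ring).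
      rewrite w_double, IH by (rewrite Nat.pow_succ_r' in Hr; lia).
      replace (2 * r')%nat with (2 * r' + Nat.b2n false)%nat by (simpl; lia).
      rewrite w_double. rewrite Nat.pow_succ_r'. simpl Nat.b2n. ring.
    + replace (q * 2 ^ S J + (2 * r' + 1))%nat with (2 * (q * 2 ^ J + r') + Nat.b2n true)%nat
        by (rewrite Nat.pow_succ_r'; simpl Nat.b2n; ring).
      rewrite w_double, IH by (rewrite Nat.pow_succ_r' in Hr; lia).
      replace (2 * r' + 1)%nat with (2 * r' + Nat.b2n true)%nat by (simpl; lia).
      rewrite w_double. rewrite Nat.pow_succ_r'. simpl Nat.b2n. ring.
Qed.

Lemma w_top : forall J r, (r < 2 ^ J)%nat ->
  bin_to_tern (2 ^ J + r) = (3 ^ J + bin_to_tern r)%nat.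
Proof.
  intros J r H. pose proof (w_block J 1 r H) as H0. rewrite Nat.mul_1_l in H0.
  rewrite H0. change (bin_to_tern 1) with 1%nat. lia.
Qed.

Open Scope R_scope.

From Coquelicot Require Import Coquelicot.

Definition Ee (t : R) : Complex.C := (cos (2 * PI * t), sin (2 * PI * t)).

Fixpoint sumC (f : nat -> Complex.C) (n : nat) : Complex.C :=
  match n with O => 0%C | S n => (sumC f n + f n)%C end.

Lemma sumC_ext : forall f g n, (forall m, (m < n)%nat -> f m = g m) -> sumC f n = sumC g n.
Proof.
  intros f g n H. induction n as [|n IH]; simpl; [reflexivity|].
  rewrite IH by (intros; apply H; lia). rewrite H by lia. reflexivity.
Qed.

Lemma sumC_add : forall f a b, sumC f (a + b) = (sumC f a + sumC (fun m => f (a + m)%nat) b)%C.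
Proof.
  intros f a b. induction b as [|b IH]; simpl.
  - rewrite Nat.add_0_r. ring.
  - rewrite Nat.add_succ_r. simpl. rewrite IH. ring.
Qed.

Lemma sumC_scal : forall c f b, sumC (fun m => c * f m)%C b = (c * sumC f b)%C.
Proof. intros c f b. induction b as [|b IH]; simpl; [ring| rewrite IH; ring]. Qed.

Lemma Ee_add : forall a b, Ee (a + b) = (Ee a * Ee b)%C.
Proof.
  intros a b. unfold Ee, Cmult; simpl. rewrite Rmult_plus_distr_l, cos_plus, sin_plus.
  f_equal; ring.
Qed.

Lemma Cmod_Ee : forall t, Cmod (Ee t) = 1.
Proof.
  intros t. unfold Cmod, Ee; simpl. transitivity (sqrt 1); [|apply sqrt_1]. f_equal.
  pose proof (sin2_cos2 (2 * PI * t)) as H. unfold Rsqr in H. nra.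
Qed.

Lemma Cmod_sumC_le : forall f n, (forall m, Cmod (f m) <= 1) -> Cmod (sumC f n) <= INR n.
Proof.
  intros f n H. induction n as [|n IH]; simpl sumC.
  - rewrite Cmod_0. simpl; lra.
  - rewrite S_INR. eapply Rle_trans; [apply Cmod_triangle|]. specialize (H n). lra.
Qed.

Definition Sg (x : R) (N : nat) : Complex.C :=
  sumC (fun n => Ee (x * INR (bin_to_tern n))) N.

Lemma Sg_split : forall x J r, (r <= 2 ^ J)%nat ->
  Sg x (2 ^ J + r) = (Sg x (2 ^ J) + Ee (x * INR (3 ^ J)) * Sg x r)%C.
Proof.
  intros x J r Hr. unfold Sg. rewrite sumC_add. f_equal.
  rewrite <- sumC_scal. apply sumC_ext. intros m Hm.
  rewrite w_top by lia. rewrite plus_INR, Rmult_plus_distr_l, Ee_add. reflexivity.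
Qed.

Lemma Sg_double : forall x J,
  Sg x (2 ^ S J) = (Sg x (2 ^ J) * (1 + Ee (x * INR (3 ^ J))))%C.
Proof.
  intros x J. replace (2 ^ S J)%nat with (2 ^ J + 2 ^ J)%nat by (simpl; lia).
  rewrite Sg_split by lia. ring.
Qed.

Lemma Cmod_Sg_le : forall x N, Cmod (Sg x N) <= INR N.
Proof. intros. apply Cmod_sumC_le. intros. rewrite Cmod_Ee. lra. Qed.

Lemma Cmod_1E : forall t, Cmod (1 + Ee t) <= 2.
Proof.
  intros t. eapply Rle_trans; [apply Cmod_triangle|]. rewrite Cmod_1, Cmod_Ee. lra.
Qed.

Lemma Cmod_1E_bad : forall t, cos (2 * PI * t) <= 0 -> Cmod (1 + Ee t) <= sqrt 2.
Proof.
  intros t H. unfold Cmod, Ee; simpl. apply sqrt_le_1_alt.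
  pose proof (sin2_cos2 (2 * PI * t)). unfold Rsqr in H0. nra.
Qed.

Definition aa (x : R) (J : nat) : R := Cmod (Sg x (2 ^ J)) / 2 ^ J.

Lemma aa_step : forall x J, aa x (S J) <= aa x J * (Cmod (1 + Ee (x * INR (3 ^ J))) / 2).
Proof.
  intros x J. unfold aa. rewrite Sg_double, Cmod_mult. simpl pow.
  pose proof (pow_lt 2 J ltac:(lra)). right. field. lra.
Qed.

Lemma aa_le1 : forall x J, 0 <= aa x J <= 1.
Proof.
  intros x J. unfold aa. pose proof (pow_lt 2 J ltac:(lra)).
  pose proof (Cmod_Sg_le x (2 ^ J)). rewrite pow_INR in H0. replace (INR 2) with 2 in H0 by (simpl; lra).
  pose proof (Cmod_ge_0 (Sg x (2 ^ J))).
  split. apply Rmult_le_pos; [lra| left; apply Rinv_0_lt_compat; lra].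
  apply Rmult_le_reg_r with (2 ^ J); [lra|]. unfold Rdiv. rewrite Rmult_assoc, Rinv_l; lra.
Qed.

Lemma aa_decr1 : forall x J, aa x (S J) <= aa x J.
Proof.
  intros x J. eapply Rle_trans; [apply aa_step|]. pose proof (Cmod_1E (x * INR (3 ^ J))).
  pose proof (aa_le1 x J). pose proof (Cmod_ge_0 (1 + Ee (x * INR (3 ^ J)))). nra.
Qed.

Lemma aa_decr : forall x J d, aa x (J + d) <= aa x J.
Proof.
  intros x J d. induction d as [|d IH]. rewrite Nat.add_0_r; lra.
  rewrite Nat.add_succ_r. eapply Rle_trans; [apply aa_decr1| exact IH].
Qed.

Lemma aa_to0 : forall x,
  (forall i0, exists i, (i0 <= i)%nat /\ cos (2 * PI * (x * INR (3 ^ i))) <= 0) ->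
  forall eps, 0 < eps -> exists J0, forall J, (J0 <= J)%nat -> aa x J <= eps.
Proof.
  intros x Hbad.
  set (rho := sqrt 2 / 2).
  assert (Hr : 0 <= rho < 1).
  { unfold rho. pose proof (sqrt_lt_R0 2 ltac:(lra)).
    assert (sqrt 2 < 2). { rewrite <- (sqrt_pow2 2) at 2 by lra. apply sqrt_lt_1_alt. lra. }
    lra. }
  assert (HL : forall L, exists J, aa x J <= rho ^ L).
  { induction L as [|L [J HJ]].
    - exists 0%nat. simpl. apply aa_le1.
    - destruct (Hbad J) as [i [Hi Hc]].
      exists (S i). eapply Rle_trans; [apply aa_step|].
      pose proof (Cmod_1E_bad _ Hc). fold rho.
      replace i with (J + (i - J))%nat at 1 by lia.
      pose proof (aa_decr x J (i - J)). pose proof (aa_le1 x i).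
      replace (J + (i - J))%nat with i in H0 by lia.
      assert (Cmod (1 + Ee (x * INR (3 ^ i))) / 2 <= rho) by (unfold rho; lra).
      pose proof (Cmod_ge_0 (1 + Ee (x * INR (3 ^ i)))).
      simpl. replace (J + (i - J))%nat with i by lia.
      apply Rle_trans with (aa x i * rho). apply Rmult_le_compat_l; lra.
      rewrite Rmult_comm. apply Rmult_le_compat_l; lra. }
  intros eps Heps.
  destruct (pow_lt_1_zero rho ltac:(rewrite Rabs_pos_eq; lra) eps Heps) as [L HLe].
  destruct (HL L) as [J HJ]. exists J. intros J' HJ'.
  replace J' with (J + (J' - J))%nat by lia. eapply Rle_trans; [apply aa_decr|].
  specialize (HLe L (le_n _)). rewrite Rabs_pos_eq in HLe by (apply pow_le; lra). lra.
Qed.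

Open Scope R_scope.

From Coquelicot Require Import Coquelicot.

Lemma cos_Zper : forall y z, cos (2 * PI * (y + IZR z)) = cos (2 * PI * y).
Proof.
  intros y z. destruct (Z_le_gt_dec 0 z) as [Hz|Hz].
  - destruct (IZN z Hz) as [n ->]. rewrite <- INR_IZR_INZ.
    replace (2 * PI * (y + INR n)) with (2 * PI * y + 2 * INR n * PI) by ring.
    apply cos_period.
  - assert (Hz' : (0 <= - z)%Z) by lia. destruct (IZN _ Hz') as [n Hn].
    replace z with (- Z.of_nat n)%Z by lia. rewrite opp_IZR, <- INR_IZR_INZ.
    rewrite <- (cos_period (2 * PI * (y + - INR n)) n). f_equal. ring.
Qed.

Lemma sin_Zper : forall y z, sin (2 * PI * (y + IZR z)) = sin (2 * PI * y).
Proof.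
  intros y z. destruct (Z_le_gt_dec 0 z) as [Hz|Hz].
  - destruct (IZN z Hz) as [n ->]. rewrite <- INR_IZR_INZ.
    replace (2 * PI * (y + INR n)) with (2 * PI * y + 2 * INR n * PI) by ring.
    apply sin_period.
  - assert (Hz' : (0 <= - z)%Z) by lia. destruct (IZN _ Hz') as [n Hn].
    replace z with (- Z.of_nat n)%Z by lia. rewrite opp_IZR, <- INR_IZR_INZ.
    rewrite <- (sin_period (2 * PI * (y + - INR n)) n). f_equal. ring.
Qed.

Definition rnd (y : R) : Z := Int_part (y + / 2).

Lemma near_int : forall y, cos (2 * PI * y) > 0 -> Rabs (y - IZR (rnd y)) < / 4.
Proof.
  intros y Hc. unfold rnd. set (m := Int_part (y + / 2)).
  destruct (base_Int_part (y + / 2)) as [H1 H2]. fold m in H1, H2.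
  set (d := y - IZR m).
  assert (Hd : cos (2 * PI * d) > 0).
  { rewrite <- (cos_Zper d m). unfold d. replace (y - IZR m + IZR m) with y by ring. exact Hc. }
  pose proof PI_RGT_0 as Hpi.
  apply Rabs_def1.
  - destruct (Rlt_le_dec d (/ 4)) as [h|h]; [exact h|].
    exfalso. assert (cos (2 * PI * d) <= 0).
    { apply cos_le_0; unfold d in *; nra. }
    lra.
  - destruct (Rlt_le_dec (- / 4) d) as [h|h]; [exact h|].
    exfalso. assert (cos (2 * PI * d) <= 0).
    { rewrite <- cos_neg. apply cos_le_0; unfold d in *; nra. }
    lra.
Qed.

Lemma INR_le_pow3 : forall t, INR t <= 3 ^ t.
Proof.
  induction t as [|t IH]; [simpl; lra|].
  rewrite S_INR. simpl pow. pose proof (pow_le 3 t ltac:(lra)).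
  assert (1 <= 3 ^ t) by (apply pow_R1_Rle; lra). lra.
Qed.

Lemma bad_exists : forall alpha k, irrational alpha -> (1 <= k)%nat ->
  forall i0, exists i, (i0 <= i)%nat /\ cos (2 * PI * (INR k * alpha * INR (3 ^ i))) <= 0.
Proof.
  intros alpha k Hirr Hk i0.
  set (x := INR k * alpha).
  destruct (classic (exists i, (i0 <= i)%nat /\ cos (2 * PI * (x * INR (3 ^ i))) <= 0))
    as [H|H]; [exact H|exfalso].
  assert (Hpos : forall i, (i0 <= i)%nat -> cos (2 * PI * (x * 3 ^ i)) > 0).
  { intros i Hi. destruct (Rle_lt_dec (cos (2 * PI * (x * 3 ^ i))) 0) as [h|h]; [|exact h].
    exfalso. apply H. exists i. split; [exact Hi|]. rewrite pow_INR.
    replace (INR 3) with 3 by (simpl; lra). exact h. }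
  set (m := fun i => rnd (x * 3 ^ i)).
  set (e := fun i => x * 3 ^ i - IZR (m i)).
  assert (He : forall i, (i0 <= i)%nat -> Rabs (e i) < / 4).
  { intros i Hi. apply near_int. apply Hpos. exact Hi. }
  assert (Hstep : forall i, (i0 <= i)%nat -> e (S i) = 3 * e i).
  { intros i Hi.
    assert (Hint : (m (S i) - 3 * m i)%Z = 0%Z).
    { apply one_IZR_lt1. rewrite minus_IZR, mult_IZR.
      pose proof (He i Hi). pose proof (He (S i) ltac:(lia)).
      apply Rabs_def2 in H0. apply Rabs_def2 in H1. unfold e in *. simpl pow in *.
      split; lra. }
    assert (IZR (m (S i)) = 3 * IZR (m i)).
    { replace (m (S i)) with (3 * m i)%Z by lia. rewrite mult_IZR. reflexivity. }
    unfold e. rewrite H0. simpl pow. ring. }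
  assert (Hgeo : forall t, e (i0 + t)%nat = 3 ^ t * e i0).
  { induction t as [|t IH]. rewrite Nat.add_0_r. simpl; ring.
    rewrite Nat.add_succ_r, Hstep by lia. rewrite IH. simpl. ring. }
  assert (He0 : e i0 = 0).
  { destruct (Req_dec (e i0) 0) as [h|h]; [exact h|exfalso].
    pose proof (Rabs_pos_lt _ h) as hp.
    destruct (INR_unbounded (/ (4 * Rabs (e i0)))) as [t Ht].
    pose proof (He (i0 + t)%nat ltac:(lia)) as Hb. rewrite Hgeo, Rabs_mult in Hb.
    rewrite (Rabs_pos_eq (3 ^ t)) in Hb by (apply pow_le; lra).
    pose proof (INR_le_pow3 t).
    assert (INR t * Rabs (e i0) > / 4).
    { apply Rmult_gt_compat_r with (r := Rabs (e i0)) in Ht; [|exact hp].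
      rewrite Rinv_mult, Rmult_assoc, Rinv_l in Ht by lra. lra. }
    nra. }
  apply Hirr. exists (m i0), (Z.of_nat (k * 3 ^ i0)). split.
  - intro Hz. assert (k * 3 ^ i0 = 0)%nat by lia.
    apply Nat.eq_mul_0 in H0. destruct H0; [lia|]. revert H0. apply Nat.pow_nonzero. lia.
  - rewrite <- INR_IZR_INZ, mult_INR, pow_INR. replace (INR 3) with 3 by (simpl; lra).
    unfold e in He0. unfold x in He0.
    assert (INR k <> 0) by (apply not_0_INR; lia).
    assert (3 ^ i0 <> 0) by (apply pow_nonzero; lra).
    field_simplify_eq; [|split; assumption]. lra.
Qed.

Open Scope R_scope.

From Coquelicot Require Import Coquelicot.

Fixpoint sumN (f : nat -> R) (n : nat) : R :=
  match n with O => 0 | S n => sumN f n + f n end.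

Lemma sumN_ext : forall f g n, (forall m, (m < n)%nat -> f m = g m) -> sumN f n = sumN g n.
Proof.
  intros f g n H. induction n as [|n IH]; simpl; [reflexivity|].
  rewrite IH by (intros; apply H; lia). rewrite H by lia. reflexivity.
Qed.

Lemma sumN_le : forall f g n, (forall m, (m < n)%nat -> f m <= g m) -> sumN f n <= sumN g n.
Proof.
  intros f g n H. induction n as [|n IH]; simpl; [lra|].
  pose proof (H n ltac:(lia)). assert (sumN f n <= sumN g n) by (apply IH; intros; apply H; lia).
  lra.
Qed.

Lemma sumN_plus : forall f g n, sumN (fun m => f m + g m) n = sumN f n + sumN g n.
Proof. intros f g n. induction n as [|n IH]; simpl; [lra| rewrite IH; ring]. Qed.

Lemma sumN_scal : forall c f n, sumN (fun m => c * f m) n = c * sumN f n.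
Proof. intros c f n. induction n as [|n IH]; simpl; [ring| rewrite IH; ring]. Qed.

Lemma sumN_const : forall c n, sumN (fun _ => c) n = c * INR n.
Proof. intros c n. induction n as [|n IH]; [simpl; ring| rewrite S_INR; simpl; rewrite IH; ring]. Qed.

Lemma fst_sumC : forall f n, fst (sumC f n) = sumN (fun m => fst (f m)) n.
Proof. intros f n. induction n as [|n IH]; simpl; [reflexivity| rewrite IH; reflexivity]. Qed.
Lemma snd_sumC : forall f n, snd (sumC f n) = sumN (fun m => snd (f m)) n.
Proof. intros f n. induction n as [|n IH]; simpl; [reflexivity| rewrite IH; reflexivity]. Qed.

Definition Bs (x : R) (J : nat) : R := sumN (fun j => Cmod (Sg x (2 ^ j))) J.

Lemma Bs_S : forall x J, Bs x (S J) = Bs x J + Cmod (Sg x (2 ^ J)).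
Proof. reflexivity. Qed.

Lemma Sg_bound : forall x J N, (N < 2 ^ J)%nat -> Cmod (Sg x N) <= Bs x J.
Proof.
  intros x J. induction J as [|J IH]; intros N HN.
  - simpl in HN. assert (N = 0%nat) by lia. subst. unfold Bs; simpl.
    unfold Sg; simpl. rewrite Cmod_0. lra.
  - rewrite Bs_S. rewrite Nat.pow_succ_r' in HN.
    pose proof (Cmod_ge_0 (Sg x (2 ^ J))).
    destruct (Nat.lt_ge_cases N (2 ^ J)) as [h|h].
    + pose proof (IH N h). lra.
    + replace N with (2 ^ J + (N - 2 ^ J))%nat by lia.
      rewrite Sg_split by lia.
      eapply Rle_trans; [apply Cmod_triangle|]. rewrite Cmod_mult, Cmod_Ee.
      pose proof (IH (N - 2 ^ J)%nat ltac:(simpl in HN; lia)). lra.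
Qed.

Lemma Bs_tail : forall x e j0, 0 <= e ->
  (forall j, (j0 <= j)%nat -> Cmod (Sg x (2 ^ j)) <= e * 2 ^ j) ->
  forall J, (j0 <= J)%nat -> Bs x J <= 2 ^ j0 + e * 2 ^ J.
Proof.
  intros x e j0 He H.
  assert (Hgen : forall J, Bs x J <= 2 ^ J).
  { induction J as [|J IH]; unfold Bs in *; simpl sumN; [simpl; lra|].
    pose proof (Cmod_Sg_le x (2 ^ J)). rewrite pow_INR in H0.
    replace (INR 2) with 2 in H0 by (simpl; lra). simpl pow. lra. }
  intros J HJ. induction J as [|J IH].
  - assert (j0 = 0%nat) by lia. subst. unfold Bs; simpl. lra.
  - destruct (Nat.eq_dec j0 (S J)) as [->|hne].
    + pose proof (Hgen (S J)). pose proof (pow_le 2 (S J) ltac:(lra)). nra.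
    + unfold Bs in *; simpl sumN. pose proof (IH ltac:(lia)). pose proof (H J ltac:(lia)).
      simpl pow. lra.
Qed.

Lemma expsum_to0 : forall x,
  (forall i0, exists i, (i0 <= i)%nat /\ cos (2 * PI * (x * INR (3 ^ i))) <= 0) ->
  forall eps, 0 < eps -> exists N0, (1 <= N0)%nat /\
    forall N, (N0 <= N)%nat -> Cmod (Sg x N) / INR N <= eps.
Proof.
  intros x Hbad eps Heps.
  destruct (aa_to0 x Hbad (eps / 4) ltac:(lra)) as [J0 HJ0].
  assert (Hc : forall j, (J0 <= j)%nat -> Cmod (Sg x (2 ^ j)) <= eps / 4 * 2 ^ j).
  { intros j Hj. specialize (HJ0 j Hj). unfold aa in HJ0.
    pose proof (pow_lt 2 j ltac:(lra)).
    apply Rmult_le_compat_r with (r := 2 ^ j) in HJ0; [|lra].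
    unfold Rdiv in HJ0. rewrite Rmult_assoc, Rinv_l, Rmult_1_r in HJ0 by lra. exact HJ0. }
  destruct (INR_unbounded (2 ^ J0 * 2 / eps)) as [n1 Hn1].
  exists (Nat.max (2 ^ J0) (S n1)). split; [lia|].
  intros N HN.
  assert (HN1 : (0 < N)%nat) by lia.
  destruct (Nat.log2_spec N HN1) as [Hl1 Hl2].
  set (J := S (Nat.log2 N)) in *.
  assert (HJ : (J0 <= J)%nat).
  { assert (2 ^ J0 < 2 ^ J)%nat by lia.
    apply Nat.pow_lt_mono_r_iff in H; lia. }
  pose proof (Sg_bound x J N Hl2).
  pose proof (Bs_tail x (eps / 4) J0 ltac:(lra) Hc J HJ).
  assert (HNr : 0 < INR N) by (apply lt_0_INR; lia).
  assert (H2J : 2 ^ J <= 2 * INR N).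
  { unfold J. simpl pow. apply le_INR in Hl1. rewrite pow_INR in Hl1.
    replace (INR 2) with 2 in Hl1 by (simpl; lra). lra. }
  assert (Hn1N : INR n1 < INR N) by (apply lt_INR; lia).
  assert (H2 : 2 ^ J0 <= eps / 2 * INR N).
  { assert (Hq : 2 ^ J0 * 2 / eps < INR N) by lra.
    apply Rmult_lt_compat_r with (r := eps) in Hq; [|lra].
    unfold Rdiv in Hq. rewrite Rmult_assoc, Rinv_l in Hq by lra. lra. }
  apply Rmult_le_reg_r with (INR N); [lra|].
  unfold Rdiv. rewrite Rmult_assoc, Rinv_l by lra.
  assert (eps / 4 * 2 ^ J <= eps / 4 * (2 * INR N)) by (apply Rmult_le_compat_l; lra). lra.
Qed.

Open Scope R_scope.

Definition phi (c : R) (k : nat) (t : R) : R := cos (2 * PI * (INR k * (t - c))).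

Inductive TS (c : R) : (R -> R) -> Prop :=
| TS_phi : forall a k, TS c (fun t => a * phi c k t)
| TS_add : forall f g, TS c f -> TS c g -> TS c (fun t => f t + g t)
| TS_ext : forall f g, TS c f -> (forall t, f t = g t) -> TS c g.

Lemma TS_scal : forall c f a, TS c f -> TS c (fun t => a * f t).
Proof.
  intros c f a H. induction H as [b k|f g _ IHf _ IHg|f g _ IH He].
  - apply TS_ext with (fun t => (a * b) * phi c k t); [apply TS_phi| intros; ring].
  - apply TS_ext with (fun t => a * f t + a * g t); [apply TS_add; auto| intros; ring].
  - apply TS_ext with (fun t => a * f t); [auto| intros; rewrite He; ring].
Qed.

Lemma TS_const : forall c a, TS c (fun _ => a).
Proof.
  intros c a. apply TS_ext with (fun t => a * phi c 0 t); [apply TS_phi|].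
  intros t. unfold phi. simpl INR. rewrite Rmult_0_l, Rmult_0_r, cos_0. ring.
Qed.

Lemma phi_mul : forall c k l t,
  phi c k t * phi c l t = / 2 * phi c (k + l) t + / 2 * phi c (if Nat.leb l k then k - l else l - k) t.
Proof.
  intros c k l t. unfold phi.
  set (u := 2 * PI * (t - c)).
  replace (2 * PI * (INR k * (t - c))) with (INR k * u) by (unfold u; ring).
  replace (2 * PI * (INR l * (t - c))) with (INR l * u) by (unfold u; ring).
  replace (2 * PI * (INR (k + l) * (t - c))) with (INR k * u + INR l * u)
    by (unfold u; rewrite plus_INR; ring).
  destruct (Nat.leb l k) eqn:E.
  - apply Nat.leb_le in E.
    replace (2 * PI * (INR (k - l) * (t - c))) with (INR k * u - INR l * u)
      by (unfold u; rewrite minus_INR by exact E; ring).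
    rewrite cos_plus, cos_minus. field.
  - apply Nat.leb_gt in E.
    replace (2 * PI * (INR (l - k) * (t - c))) with (INR l * u - INR k * u)
      by (unfold u; rewrite minus_INR by lia; ring).
    rewrite cos_plus, cos_minus. field.
Qed.

Lemma TS_mul_phi : forall c g, TS c g -> forall a k, TS c (fun t => a * phi c k t * g t).
Proof.
  intros c g H. induction H as [b l|f g _ IHf _ IHg|f g _ IH He]; intros a k.
  - apply TS_ext with (fun t => (a * b / 2) * phi c (k + l) t
       + (a * b / 2) * phi c (if Nat.leb l k then k - l else l - k) t).
    + apply TS_add; apply TS_phi.
    + intros t. replace (a * phi c k t * (b * phi c l t)) with (a * b * (phi c k t * phi c l t)) by ring.
      rewrite phi_mul. field.
  - apply TS_ext with (fun t => a * phi c k t * f t + a * phi c k t * g t).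
    + apply TS_add; auto.
    + intros; ring.
  - apply TS_ext with (fun t => a * phi c k t * f t); [auto| intros; rewrite He; ring].
Qed.

Lemma TS_mul : forall c f g, TS c f -> TS c g -> TS c (fun t => f t * g t).
Proof.
  intros c f g Hf Hg. induction Hf as [a k|f1 f2 _ IH1 _ IH2|f1 f2 _ IH He].
  - apply TS_mul_phi. exact Hg.
  - apply TS_ext with (fun t => f1 t * g t + f2 t * g t); [apply TS_add; auto| intros; ring].
  - apply TS_ext with (fun t => f1 t * g t); [auto| intros; rewrite He; ring].
Qed.

Lemma TS_pow : forall c f n, TS c f -> TS c (fun t => f t ^ n).
Proof.
  intros c f n H. induction n as [|n IH].
  - apply TS_ext with (fun _ => 1); [apply TS_const| intros; simpl; ring].
  - apply TS_ext with (fun t => f t * f t ^ n); [apply TS_mul; auto| intros; simpl; ring].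
Qed.

Definition avgS (v : nat -> R) (f : R -> R) (N : nat) : R := sumN (fun n => f (v n)) N / INR N.
Definition avgG (f : R -> R) (M : nat) : R := sumN (fun j => f (INR j / INR M)) M / INR M.
Definition Good (v : nat -> R) (f : R -> R) : Prop :=
  exists L, Un_cv (avgS v f) L /\ Un_cv (avgG f) L.
Definition WeylHyp (v : nat -> R) : Prop :=
  forall k, (1 <= k)%nat ->
    Un_cv (fun N => sumN (fun n => cos (2 * PI * (INR k * v n))) N / INR N) 0 /\
    Un_cv (fun N => sumN (fun n => sin (2 * PI * (INR k * v n))) N / INR N) 0.

Lemma Un_cv_ext : forall u w l, (forall n, u n = w n) -> Un_cv u l -> Un_cv w l.
Proof. intros u w l H Hu eps He. destruct (Hu eps He) as [N HN]. exists N. intros n Hn. rewrite <- H. auto. Qed.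

Lemma Un_cv_event : forall u l n0, (forall n, (n0 <= n)%nat -> u n = l) -> Un_cv u l.
Proof.
  intros u l n0 H eps He. exists n0. intros n Hn. rewrite H by lia. unfold R_dist.
  rewrite Rminus_diag, Rabs_R0. exact He.
Qed.

Lemma Good_add : forall v f g, Good v f -> Good v g -> Good v (fun t => f t + g t).
Proof.
  intros v f g [L1 [H1 H2]] [L2 [H3 H4]]. exists (L1 + L2). split.
  - apply Un_cv_ext with (fun N => avgS v f N + avgS v g N).
    + intros N. unfold avgS. rewrite sumN_plus. unfold Rdiv. ring.
    + apply CV_plus; auto.
  - apply Un_cv_ext with (fun N => avgG f N + avgG g N).
    + intros N. unfold avgG. rewrite sumN_plus. unfold Rdiv. ring.
    + apply CV_plus; auto.
Qed.

Lemma Good_ext : forall v f g, Good v f -> (forall t, f t = g t) -> Good v g.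
Proof.
  intros v f g [L [H1 H2]] He. exists L. split.
  - apply Un_cv_ext with (avgS v f); auto. intros N. unfold avgS. f_equal. apply sumN_ext. auto.
  - apply Un_cv_ext with (avgG f); auto. intros N. unfold avgG. f_equal. apply sumN_ext. auto.
Qed.

Lemma Un_cv_const : forall c, Un_cv (fun _ => c) c.
Proof. intros c. apply Un_cv_event with 0%nat. auto. Qed.

Lemma grid_sum : forall th x M,
  2 * sin (x / 2) * sumN (fun j => cos (th + INR j * x)) M =
  sin (th + INR M * x - x / 2) - sin (th - x / 2).
Proof.
  intros th x M. induction M as [|M IH].
  - simpl. replace (th + 0 * x - x / 2) with (th - x / 2) by ring. ring.
  - simpl sumN. rewrite Rmult_plus_distr_l, IH, S_INR.
    replace (th + (INR M + 1) * x - x / 2) with ((th + INR M * x) + x / 2) by field.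
    replace (th + INR M * x - x / 2) with ((th + INR M * x) - x / 2) by ring.
    rewrite sin_plus, sin_minus. ring.
Qed.

Lemma grid_zero : forall c k M, (1 <= k)%nat -> (k < M)%nat ->
  sumN (fun j => cos (2 * PI * (INR k * (INR j / INR M - c)))) M = 0.
Proof.
  intros c k M Hk HM.
  assert (HMr : 0 < INR M) by (apply lt_0_INR; lia).
  assert (Hkr : 0 < INR k) by (apply lt_0_INR; lia).
  assert (HkM : INR k < INR M) by (apply lt_INR; lia).
  set (x := 2 * PI * INR k / INR M). set (th := - (2 * PI * INR k * c)).
  assert (Hs : 0 < sin (x / 2)).
  { apply sin_gt_0; unfold x; pose proof PI_RGT_0.
    - apply Rmult_lt_0_compat; [|lra]. apply Rdiv_lt_0_compat; nra.
    - replace (2 * PI * INR k / INR M / 2) with (PI * (INR k / INR M)) by (field; lra).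
      assert (INR k / INR M < 1).
      { unfold Rdiv. apply Rmult_lt_reg_r with (INR M); [lra|].
        rewrite Rmult_assoc, Rinv_l, Rmult_1_r, Rmult_1_l by lra. lra. }
      nra. }
  pose proof (grid_sum th x M) as G.
  replace (th + INR M * x - x / 2) with ((th - x / 2) + 2 * INR k * PI) in G
    by (unfold x; field; lra).
  rewrite sin_period, Rminus_diag in G.
  rewrite (sumN_ext _ (fun j => cos (th + INR j * x))).
  - apply Rmult_integral in G. destruct G; [lra| assumption].
  - intros j _. f_equal. unfold th, x. field. lra.
Qed.

Lemma Good_phi : forall v c a k, WeylHyp v -> Good v (fun t => a * phi c k t).
Proof.
  intros v c a k HW. destruct k as [|k].
  - apply Good_ext with (fun _ => a).
    2:{ intros t. unfold phi. simpl INR. rewrite Rmult_0_l, Rmult_0_r, cos_0. ring. }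
    exists a. split.
    + apply Un_cv_event with 1%nat. intros n Hn. unfold avgS. rewrite sumN_const. field.
      apply not_0_INR. lia.
    + apply Un_cv_event with 1%nat. intros n Hn. unfold avgG. rewrite sumN_const. field.
      apply not_0_INR. lia.
  - exists 0. destruct (HW (S k) ltac:(lia)) as [Hc Hs]. split.
    + set (C := cos (2 * PI * (INR (S k) * c))). set (Sn := sin (2 * PI * (INR (S k) * c))).
      apply Un_cv_ext with (fun N =>
        a * C * (sumN (fun n => cos (2 * PI * (INR (S k) * v n))) N / INR N) +
        a * Sn * (sumN (fun n => sin (2 * PI * (INR (S k) * v n))) N / INR N)).
      * intros N. unfold avgS. cbv beta.
        rewrite (sumN_ext (fun n => a * phi c (S k) (v n)) (fun n => a * C * cos (2 * PI * (INR (S k) * v n)) +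
                                      a * Sn * sin (2 * PI * (INR (S k) * v n)))).
        -- rewrite sumN_plus, !sumN_scal. unfold Rdiv. ring.
        -- intros n _. unfold phi, C, Sn.
           replace (2 * PI * (INR (S k) * (v n - c))) with
             (2 * PI * (INR (S k) * v n) - 2 * PI * (INR (S k) * c)) by ring.
           rewrite cos_minus. ring.
      * replace 0 with (a * C * 0 + a * Sn * 0) by ring.
        apply CV_plus; apply CV_mult; auto; apply Un_cv_const.
    + apply Un_cv_event with (S (S k)). intros M HM. unfold avgG.
      rewrite sumN_scal. unfold phi. rewrite grid_zero by lia. unfold Rdiv. ring.
Qed.

Lemma TS_Good : forall v c f, WeylHyp v -> TS c f -> Good v f.
Proof.
  intros v c f HW H. induction H.
  - apply Good_phi; auto.
  - apply Good_add; auto.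
  - eapply Good_ext; eauto.
Qed.

Open Scope R_scope.

Lemma bern_lo : forall K u, 0 <= u <= 1 -> 1 - INR K * u <= (1 - u) ^ K.
Proof.
  intros K u Hu. induction K as [|K IH].
  - simpl. lra.
  - rewrite S_INR. simpl pow. pose proof (pow_le (1 - u) K ltac:(lra)).
    destruct (Rle_dec 0 (1 - INR K * u)).
    + assert ((1 - INR K * u) * (1 - u) <= (1 - u) * (1 - u) ^ K).
      { rewrite Rmult_comm. apply Rmult_le_compat_l; lra. }
      pose proof (pos_INR K). nra.
    + assert (0 <= (1 - u) * (1 - u) ^ K) by (apply Rmult_le_pos; lra).
      pose proof (pos_INR K). nra.
Qed.

Lemma bern_hi : forall K u, 0 <= u <= 1 -> (1 - u) ^ K * (1 + INR K * u) <= 1.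
Proof.
  intros K u Hu. induction K as [|K IH].
  - simpl. lra.
  - rewrite S_INR. simpl pow. pose proof (pow_le (1 - u) K ltac:(lra)).
    pose proof (pos_INR K).
    assert ((1 - u) * (1 - u) ^ K * (1 + (INR K + 1) * u) =
            (1 - u) ^ K * (1 + INR K * u) - (1 - u) ^ K * (u * u * (INR K + 1))) by ring.
    rewrite H1. assert (0 <= (1 - u) ^ K * (u * u * (INR K + 1))).
    { apply Rmult_le_pos; [lra|]. apply Rmult_le_pos; nra. }
    lra.
Qed.

Lemma pow_le_1 : forall z m, 0 <= z <= 1 -> 0 <= z ^ m <= 1.
Proof.
  intros z m Hz. split; [apply pow_le; lra|].
  rewrite <- (pow1 m). apply pow_incr. lra.
Qed.

Definition ind_gt (X : R) (j : nat) : R := if Rlt_dec X (INR j) then 1 else 0.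
Definition ind_open (X Y : R) (j : nat) : R :=
  if Rlt_dec X (INR j) then (if Rlt_dec (INR j) Y then 1 else 0) else 0.

Lemma cnt_gt : forall X n, sumN (ind_gt X) n <= Rmax 0 (INR n - X).
Proof.
  intros X n. induction n as [|n IH].
  - simpl. unfold Rmax. destruct (Rle_dec 0 (0 - X)); lra.
  - simpl sumN. rewrite S_INR. unfold ind_gt at 2. revert IH. unfold Rmax.
    destruct (Rlt_dec X (INR n)); destruct (Rle_dec 0 (INR n - X));
    destruct (Rle_dec 0 (INR n + 1 - X)); intros; lra.
Qed.

Lemma cnt_open : forall X Y n, X < Y -> sumN (ind_open X Y) n <= Y - X + 1.
Proof.
  intros X Y n HXY. induction n as [|n IH].
  - simpl. lra.
  - simpl sumN. unfold ind_open at 2.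
    destruct (Rlt_dec X (INR n)) as [h1|h1]; [destruct (Rlt_dec (INR n) Y) as [h2|h2]|].
    + rewrite (sumN_ext _ (ind_gt X)).
      * pose proof (cnt_gt X n). revert H. unfold Rmax.
        destruct (Rle_dec 0 (INR n - X)); intros; lra.
      * intros m Hm. unfold ind_open, ind_gt. assert (INR m < INR n) by (apply lt_INR; lia).
        destruct (Rlt_dec X (INR m)); [|reflexivity].
        destruct (Rlt_dec (INR m) Y); [reflexivity| lra].
    + lra.
    + lra.
Qed.

Lemma cos_far : forall r s, 0 <= r <= / 2 -> r <= s <= 1 - r ->
  cos (2 * PI * s) <= cos (2 * PI * r).
Proof.
  intros r s Hr Hs. pose proof PI_RGT_0.
  destruct (Rle_dec s (/ 2)).
  - apply cos_decr_1; nra.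
  - replace (2 * PI * s) with (2 * PI * ((s - 1) + IZR 1)) by (simpl; ring).
    rewrite cos_Zper, <- cos_neg.
    replace (- (2 * PI * (s - 1))) with (2 * PI * (1 - s)) by ring.
    apply cos_decr_1; nra.
Qed.

Open Scope R_scope.

Definition indI (a b t : R) : R := if in_Ico a b t then 1 else 0.

Lemma ind_bounds : forall a b t, 0 <= indI a b t <= 1.
Proof. intros. unfold indI. destruct (in_Ico a b t); lra. Qed.

Lemma ind_true : forall a b t, indI a b t <> 0 -> a <= t < b.
Proof.
  intros a b t. unfold indI, in_Ico.
  destruct (Rle_dec a t); destruct (Rlt_dec t b); intros; try lra.
Qed.

Lemma le_of_all_eps : forall L B, (forall z, 0 < z -> L <= B + z) -> L <= B.
Proof.
  intros L B H. destruct (Rle_dec L B); [assumption|].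
  specialize (H ((L - B) / 2) ltac:(lra)). lra.
Qed.

Lemma Rdiv_le_1 : forall x n, 0 < n -> x <= n -> x / n <= 1.
Proof.
  intros x n Hn Hx. unfold Rdiv. apply Rmult_le_reg_r with n; [lra|].
  rewrite Rmult_assoc, Rinv_l by lra. lra.
Qed.

Lemma weyl_upper : forall v, WeylHyp v -> forall a b, 0 <= a -> a <= b -> b <= 1 ->
  forall eps, 0 < eps -> exists N0, (1 <= N0)%nat /\ forall N, (N0 <= N)%nat ->
    sumN (fun n => indI a b (v n)) N / INR N <= b - a + eps.
Proof.
  intros v HW a b Ha Hab Hb eps Heps.
  destruct (Rle_dec 1 (b - a + eps)) as [Hbig|Hsmall].
  { exists 1%nat. split; [lia|]. intros N HN.
    assert (0 < INR N) by (apply lt_0_INR; lia).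
    assert (sumN (fun n => indI a b (v n)) N <= INR N).
    { rewrite <- (Rmult_1_l (INR N)), <- sumN_const. apply sumN_le.
      intros. apply ind_bounds. }
    pose proof (Rdiv_le_1 _ _ H H0). lra. }
  set (d := eps / 16).
  assert (Hd : 0 < d < / 16) by (unfold d; lra).
  set (c := (a + b) / 2). set (r := (b - a) / 2). set (r' := r + d).
  assert (Hr : 0 <= r) by (unfold r; lra).
  assert (Hr' : r' < / 2) by (unfold r', r, d; lra).
  pose proof PI_RGT_0 as Hpi.
  assert (Hrh : r < / 2) by (unfold r' in Hr'; lra).
  assert (Hr2 : 2 * PI * r <= PI).
  { replace PI with (2 * PI * / 2) at 2 by field. apply Rmult_le_compat_l; lra. }
  assert (Hr0 : 0 <= 2 * PI * r) by (apply Rmult_le_pos; lra).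
  assert (Hr2' : 2 * PI * r' <= PI).
  { replace PI with (2 * PI * / 2) at 2 by field. apply Rmult_le_compat_l; lra. }
  set (y0 := cos (2 * PI * r)). set (y1 := cos (2 * PI * r')).
  assert (Hy : y1 < y0).
  { apply cos_decreasing_1; unfold r' in *; nra. }
  set (z0 := (1 + y0) / 2). set (z1 := (1 + y1) / 2).
  assert (Hz1 : 0 <= z1) by (unfold z1, y1; pose proof (COS_bound (2 * PI * r')); lra).
  assert (Hz0 : z1 < z0 <= 1) by (unfold z0, z1, y0 in *; pose proof (COS_bound (2 * PI * r)); lra).
  set (rho := z1 / z0).
  assert (Hrho : 0 <= rho < 1).
  { unfold rho. split.
    - unfold Rdiv. apply Rmult_le_pos; [lra| left; apply Rinv_0_lt_compat; lra].
    - unfold Rdiv. apply Rmult_lt_reg_r with z0; [lra|].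
      rewrite Rmult_assoc, Rinv_l by lra. lra. }
  set (tau := d * (1 - d) / (/ d + 1)).
  assert (Htau : 0 < tau).
  { unfold tau. apply Rdiv_lt_0_compat; [nra|]. pose proof (Rinv_0_lt_compat d ltac:(lra)). lra. }
  destruct (pow_lt_1_zero rho ltac:(rewrite Rabs_pos_eq; lra) tau Htau) as [m Hm].
  specialize (Hm m (le_n m)). rewrite Rabs_pos_eq in Hm by (apply pow_le; lra).
  set (u0 := z0 ^ m).
  assert (Hu0 : 0 < u0 <= 1).
  { unfold u0. split; [apply pow_lt; lra|]. apply pow_le_1. lra. }
  set (Kz := up (/ (d * u0))).
  destruct (archimed (/ (d * u0))) as [HK1 HK2]. fold Kz in HK1, HK2.
  assert (Hdu : 0 < / (d * u0)) by (apply Rinv_0_lt_compat; nra).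
  set (K := Z.to_nat Kz).
  assert (HKr : INR K = IZR Kz).
  { unfold K. rewrite INR_IZR_INZ, Z2Nat.id; [reflexivity|].
    apply Z.lt_le_incl, lt_0_IZR. lra. }
  set (F := fun z => 1 - (1 - z ^ m) ^ K).
  assert (HF01 : forall z, 0 <= z <= 1 -> 0 <= F z <= 1).
  { intros z Hz. unfold F. pose proof (pow_le_1 z m Hz).
    pose proof (pow_le_1 (1 - z ^ m) K ltac:(lra)). lra. }
  assert (HFhi : forall z, z0 <= z <= 1 -> 1 - d <= F z).
  { intros z Hz. unfold F.
    assert (Hu : u0 <= z ^ m <= 1) by (split; [apply pow_incr; lra| apply pow_le_1; lra]).
    assert (H1 : (1 - z ^ m) ^ K <= (1 - u0) ^ K) by (apply pow_incr; lra).
    pose proof (bern_hi K u0 ltac:(lra)) as H2.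
    assert (H3 : INR K * u0 > / d).
    { rewrite HKr. apply Rmult_gt_compat_r with (r := u0) in HK1; [|lra].
      replace (/ (d * u0) * u0) with (/ d) in HK1 by (field; lra). lra. }
    set (X := (1 - u0) ^ K) in *.
    assert (HX : 0 <= X) by (unfold X; apply pow_le; lra).
    assert (X * / d <= 1).
    { apply Rle_trans with (X * (1 + INR K * u0)); [|lra].
      apply Rmult_le_compat_l; lra. }
    assert (X <= d).
    { apply Rle_trans with (d * (X * / d)); [right; field; lra|].
      apply Rle_trans with (d * 1); [apply Rmult_le_compat_l; lra| lra]. }
    lra. }
  assert (HFlo : forall z, 0 <= z <= z1 -> F z <= d * (1 - d)).
  { intros z Hz. unfold F.
    assert (Hzm : 0 <= z ^ m <= 1) by (apply pow_le_1; lra).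
    pose proof (bern_lo K (z ^ m) Hzm).
    assert (Hz1m : z ^ m <= rho ^ m * u0).
    { unfold u0. rewrite <- Rpow_mult_distr. apply pow_incr.
      unfold rho. replace (z1 / z0 * z0) with z1 by (field; lra). lra. }
    assert (HKle : INR K <= / (d * u0) + 1) by (rewrite HKr; lra).
    assert (INR K * z ^ m <= (/ (d * u0) + 1) * (rho ^ m * u0)).
    { apply Rmult_le_compat; try lra. }
    assert ((/ (d * u0) + 1) * (rho ^ m * u0) <= rho ^ m * (/ d + 1)).
    { replace ((/ (d * u0) + 1) * (rho ^ m * u0)) with (rho ^ m * (/ d + u0)) by (field; lra).
      apply Rmult_le_compat_l; [apply pow_le; lra| lra]. }
    assert (rho ^ m * (/ d + 1) <= tau * (/ d + 1)).
    { apply Rmult_le_compat_r; [|lra]. pose proof (Rinv_0_lt_compat d ltac:(lra)). lra. }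
    assert (tau * (/ d + 1) = d * (1 - d)).
    { unfold tau. field. split; [lra|]. pose proof (Rinv_0_lt_compat d ltac:(lra)). lra. }
    lra. }
  set (zz := fun t => (1 + cos (2 * PI * (t - c))) / 2).
  assert (Hzz : forall t, 0 <= zz t <= 1).
  { intros t. unfold zz. pose proof (COS_bound (2 * PI * (t - c))). lra. }
  set (P := fun t => F (zz t) / (1 - d)).
  assert (HP0 : forall t, 0 <= P t <= / (1 - d)).
  { intros t. unfold P. pose proof (HF01 _ (Hzz t)).
    assert (0 < / (1 - d)) by (apply Rinv_0_lt_compat; lra).
    unfold Rdiv. split; [apply Rmult_le_pos; lra|]. rewrite <- (Rmult_1_l (/ (1 - d))) at 2.
    apply Rmult_le_compat_r; lra. }
  assert (HP1 : forall t, a <= t < b -> 1 <= P t).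
  { intros t Ht.
    assert (Hcos : y0 <= cos (2 * PI * (t - c))).
    { unfold y0. destruct (Rle_dec c t).
      - assert (0 <= t - c <= r) by (unfold c, r in *; lra).
        assert (2 * PI * (t - c) <= 2 * PI * r) by (apply Rmult_le_compat_l; lra).
        assert (0 <= 2 * PI * (t - c)) by (apply Rmult_le_pos; lra).
        apply cos_decr_1; lra.
      - rewrite <- (cos_neg (2 * PI * (t - c))). replace (- (2 * PI * (t - c))) with (2 * PI * (c - t)) by ring.
        assert (0 < c - t <= r) by (unfold c, r in *; lra).
        assert (2 * PI * (c - t) <= 2 * PI * r) by (apply Rmult_le_compat_l; lra).
        assert (0 <= 2 * PI * (c - t)) by (apply Rmult_le_pos; lra).
        apply cos_decr_1; lra. }
    assert (z0 <= zz t) by (unfold zz, z0; lra).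
    pose proof (HFhi (zz t) ltac:(split; [lra| apply Hzz])).
    unfold P. unfold Rdiv. apply Rmult_le_reg_r with (1 - d); [lra|].
    rewrite Rmult_assoc, Rinv_l by lra. lra. }
  assert (HP2 : forall t, cos (2 * PI * (t - c)) <= y1 -> P t <= d).
  { intros t Ht. assert (zz t <= z1) by (unfold zz, z1; lra).
    pose proof (HFlo (zz t) ltac:(split; [apply Hzz| lra])).
    unfold P. unfold Rdiv. apply Rmult_le_reg_r with (1 - d); [lra|].
    rewrite Rmult_assoc, Rinv_l by lra. lra. }
  assert (HP3 : forall t, 0 <= t < 1 -> y1 < cos (2 * PI * (t - c)) ->
            (a - d < t < b + d) \/ t < d \/ 1 - d < t).
  { intros t Ht Hc. apply NNPP. intros Hn.
    assert (Hd1 : d <= t <= 1 - d) by lra.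
    assert (Hfar : t <= a - d \/ b + d <= t) by lra.
    apply (Rlt_not_le _ _ Hc). unfold y1. destruct Hfar as [Hf|Hf].
    - rewrite <- (cos_neg (2 * PI * (t - c))). replace (- (2 * PI * (t - c))) with (2 * PI * (c - t)) by ring.
      apply cos_far; unfold r', r, c in *; lra.
    - apply cos_far; unfold r', r, c in *; lra. }
  assert (HTS : TS c P).
  { apply TS_ext with (fun t => / (1 - d) * (1 + -1 * ((1 + -1 * ((/ 2 + / 2 * phi c 1 t) ^ m)) ^ K))).
    - apply TS_scal. apply TS_add; [apply TS_const|]. apply TS_scal. apply TS_pow.
      apply TS_add; [apply TS_const|]. apply TS_scal. apply TS_pow.
      apply TS_add; [apply TS_const| apply TS_phi].
    - intros t. unfold P, F, zz, phi. simpl INR. rewrite Rmult_1_l.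
      replace (/ 2 + / 2 * cos (2 * PI * (t - c))) with ((1 + cos (2 * PI * (t - c))) / 2) by field.
      unfold Rdiv. set (Y := (1 + cos (2 * PI * (t - c))) * / 2). set (Z := Y ^ m). replace (1 + -1 * Z) with (1 - Z) by ring. set (W := (1 - Z) ^ K). ring. }
  destruct (TS_Good v c P HW HTS) as [L [HLs HLg]].
  assert (Hid : 0 < / (1 - d)) by (apply Rinv_0_lt_compat; lra).
  assert (Hind_open : forall X Y j, 0 <= ind_open X Y j).
  { intros. unfold ind_open. destruct (Rlt_dec X (INR j)); [destruct (Rlt_dec (INR j) Y)|]; lra. }
  assert (Hind1 : forall X Y j, X < INR j < Y -> ind_open X Y j = 1).
  { intros X Y j Hj. unfold ind_open. destruct (Rlt_dec X (INR j)); [destruct (Rlt_dec (INR j) Y)|]; lra. }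
  assert (Hgrid : forall M, (1 <= M)%nat ->
            avgG P M <= / (1 - d) * (b - a + 4 * d + 4 / INR M) + d).
  { intros M HM. assert (HMr : 0 < INR M) by (apply lt_0_INR; lia).
    set (X1 := (a - d) * INR M). set (Y1 := (b + d) * INR M).
    set (X3 := (1 - d) * INR M).
    assert (Hpt : forall j, (j < M)%nat -> P (INR j / INR M) <=
              / (1 - d) * (ind_open X1 Y1 j + ind_open (-1) (d * INR M) j + ind_open X3 (INR M) j) + d).
    { intros j Hj. set (t := INR j / INR M).
      assert (Hjt : INR j = t * INR M) by (unfold t; field; lra).
      assert (Ht : 0 <= t < 1).
      { unfold t. split. apply Rmult_le_pos; [apply pos_INR| left; apply Rinv_0_lt_compat; lra].
        assert (INR j < INR M) by (apply lt_INR; lia).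
        unfold Rdiv. apply Rmult_lt_reg_r with (INR M); [lra|].
        rewrite Rmult_assoc, Rinv_l by lra. lra. }
      pose proof (Hind_open X1 Y1 j). pose proof (Hind_open (-1) (d * INR M) j).
      pose proof (Hind_open X3 (INR M) j).
      destruct (Rle_dec (cos (2 * PI * (t - c))) y1) as [hc|hc].
      - pose proof (HP2 t hc).
        assert (0 <= / (1 - d) * (ind_open X1 Y1 j + ind_open (-1) (d * INR M) j + ind_open X3 (INR M) j))
          by (apply Rmult_le_pos; lra).
        lra.
      - assert (HS : 1 <= ind_open X1 Y1 j + ind_open (-1) (d * INR M) j + ind_open X3 (INR M) j).
        { destruct (HP3 t Ht ltac:(lra)) as [[h1 h2]|[h|h]].
          - rewrite (Hind1 X1 Y1 j); [lra|]. unfold X1, Y1. rewrite Hjt.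
            split; apply Rmult_lt_compat_r; lra.
          - rewrite (Hind1 (-1) (d * INR M) j); [lra|]. rewrite Hjt.
            split; [nra| apply Rmult_lt_compat_r; lra].
          - rewrite (Hind1 X3 (INR M) j); [lra|]. unfold X3. rewrite Hjt.
            split; [apply Rmult_lt_compat_r; lra| nra]. }
        pose proof (HP0 t).
        assert (/ (1 - d) * 1 <= / (1 - d) * (ind_open X1 Y1 j + ind_open (-1) (d * INR M) j + ind_open X3 (INR M) j))
          by (apply Rmult_le_compat_l; lra).
        lra. }
    assert (Hsum : sumN (fun j => P (INR j / INR M)) M <=
              / (1 - d) * ((b - a + 4 * d) * INR M + 4) + d * INR M).
    { eapply Rle_trans; [apply sumN_le; exact Hpt|].
      rewrite sumN_plus, sumN_const, sumN_scal, !sumN_plus.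
      pose proof (cnt_open X1 Y1 M ltac:(unfold X1, Y1; apply Rmult_lt_compat_r; lra)).
      pose proof (cnt_open (-1) (d * INR M) M ltac:(nra)).
      pose proof (cnt_open X3 (INR M) M ltac:(unfold X3; nra)).
      assert (sumN (ind_open X1 Y1) M + sumN (ind_open (-1) (d * INR M)) M + sumN (ind_open X3 (INR M)) M
              <= (b - a + 4 * d) * INR M + 4) by (unfold X1, Y1, X3 in *; lra).
      assert (/ (1 - d) * (sumN (ind_open X1 Y1) M + sumN (ind_open (-1) (d * INR M)) M + sumN (ind_open X3 (INR M)) M)
              <= / (1 - d) * ((b - a + 4 * d) * INR M + 4)) by (apply Rmult_le_compat_l; lra).
      lra. }
    unfold avgG. apply Rle_trans with ((/ (1 - d) * ((b - a + 4 * d) * INR M + 4) + d * INR M) / INR M).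
    - unfold Rdiv. apply Rmult_le_compat_r; [left; apply Rinv_0_lt_compat; lra| exact Hsum].
    - right. field. lra. }
  assert (HL : L <= / (1 - d) * (b - a + 4 * d) + d).
  { apply le_of_all_eps. intros z Hz.
    destruct (HLg (z / 2) ltac:(lra)) as [M1 HM1].
    destruct (INR_unbounded (8 / ((1 - d) * z))) as [n2 Hn2].
    set (M := Nat.max M1 (S n2)).
    specialize (HM1 M ltac:(unfold M; lia)). unfold R_dist in HM1.
    apply Rabs_def2 in HM1.
    pose proof (Hgrid M ltac:(unfold M; lia)).
    assert (HMr : INR n2 < INR M) by (apply lt_INR; unfold M; lia).
    assert (HM4 : / (1 - d) * (4 / INR M) <= z / 2).
    { pose proof (pos_INR n2). assert (0 < INR M) by lra.
      assert (Hq : 8 / ((1 - d) * z) < INR M) by lra.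
      assert (8 < INR M * ((1 - d) * z)).
      { apply Rmult_lt_compat_r with (r := (1 - d) * z) in Hq; [|nra].
        unfold Rdiv in Hq. rewrite Rmult_assoc, Rinv_l in Hq by nra. lra. }
      replace (/ (1 - d) * (4 / INR M)) with (4 / ((1 - d) * INR M)) by (field; lra).
      unfold Rdiv. apply Rmult_le_reg_r with ((1 - d) * INR M); [nra|].
      rewrite Rmult_assoc, Rinv_l by nra. nra. }
    assert (/ (1 - d) * (b - a + 4 * d + 4 / INR M) = / (1 - d) * (b - a + 4 * d) + / (1 - d) * (4 / INR M))
      by ring.
    lra. }
  destruct (HLs d ltac:(lra)) as [N1 HN1].
  exists (Nat.max N1 1). split; [lia|]. intros N HN.
  assert (HNr : 0 < INR N) by (apply lt_0_INR; lia).
  specialize (HN1 N ltac:(lia)). unfold R_dist in HN1. apply Rabs_def2 in HN1.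
  assert (Hcmp : sumN (fun n => indI a b (v n)) N / INR N <= avgS v P N).
  { unfold avgS. unfold Rdiv. apply Rmult_le_compat_r; [left; apply Rinv_0_lt_compat; lra|].
    apply sumN_le. intros n _. destruct (Req_dec (indI a b (v n)) 0) as [h|h].
    - rewrite h. apply HP0.
    - pose proof (ind_true _ _ _ h). pose proof (HP1 _ H). pose proof (ind_bounds a b (v n)). lra. }
  assert (Hfin : / (1 - d) * (b - a + 4 * d) <= b - a + 4 * d + 4 * d).
  { apply Rmult_le_reg_l with (1 - d); [lra|]. rewrite <- Rmult_assoc, Rinv_r, Rmult_1_l by lra.
    assert (b - a + 4 * d <= 2) by (unfold d in *; lra). nra. }
  unfold d in *. lra.
Qed.

Open Scope R_scope.

From Coquelicot Require Import Coquelicot.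

Lemma im_le_Cmod : forall c : Complex.C, Rabs (snd c) <= Cmod c.
Proof.
  intros [x y]. unfold Cmod; simpl. rewrite <- sqrt_Rsqr_abs. apply sqrt_le_1_alt.
  unfold Rsqr. nra.
Qed.

Lemma frac_range : forall x, 0 <= frac x < 1.
Proof. intros x. unfold frac. destruct (base_Int_part x). lra. Qed.

Lemma count_sum : forall g a b N, INR (count_in g a b N) = sumN (fun n => indI a b (g n)) N.
Proof.
  intros g a b N. induction N as [|N IH]; [reflexivity|].
  unfold count_in in *. rewrite seq_S, filter_app, length_app, plus_INR, IH.
  simpl sumN. f_equal. unfold indI. simpl. destruct (in_Ico a b (g N)); simpl; lra.
Qed.

Lemma ind_split : forall a b t, 0 <= a -> a <= b -> b <= 1 -> 0 <= t < 1 ->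
  indI a b t + indI 0 a t + indI b 1 t = 1.
Proof.
  intros a b t Ha Hab Hb Ht. unfold indI, in_Ico.
  destruct (Rle_dec a t); destruct (Rlt_dec t b); destruct (Rle_dec 0 t); destruct (Rlt_dec t a);
  destruct (Rle_dec b t); destruct (Rlt_dec t 1); lra.
Qed.

Lemma weyl_v : forall alpha, irrational alpha ->
  WeylHyp (fun n => frac (alpha * INR (bin_to_tern n))).
Proof.
  intros alpha Hirr k Hk.
  set (x := INR k * alpha).
  assert (Hcos : forall n, cos (2 * PI * (INR k * frac (alpha * INR (bin_to_tern n)))) =
                           fst (Ee (x * INR (bin_to_tern n)))).
  { intros n. unfold Ee, frac, x; simpl.
    set (y := alpha * INR (bin_to_tern n)).
    replace (INR k * (y - IZR (Int_part y))) with
      (INR k * y + IZR (- (Z.of_nat k * Int_part y))) by (rewrite opp_IZR, mult_IZR, <- INR_IZR_INZ; ring).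
    rewrite cos_Zper. f_equal. unfold y. ring. }
  assert (Hsin : forall n, sin (2 * PI * (INR k * frac (alpha * INR (bin_to_tern n)))) =
                           snd (Ee (x * INR (bin_to_tern n)))).
  { intros n. unfold Ee, frac, x; simpl.
    set (y := alpha * INR (bin_to_tern n)).
    replace (INR k * (y - IZR (Int_part y))) with
      (INR k * y + IZR (- (Z.of_nat k * Int_part y))) by (rewrite opp_IZR, mult_IZR, <- INR_IZR_INZ; ring).
    rewrite sin_Zper. f_equal. unfold y. ring. }
  pose proof (expsum_to0 x (bad_exists alpha k Hirr Hk)) as HE.
  split; intros eps Heps; destruct (HE (eps / 2) ltac:(lra)) as [N0 [HN0 HN]];
    exists N0; intros N HNN; specialize (HN N HNN); unfold R_dist;
    assert (HNr : 0 < INR N) by (apply lt_0_INR; lia).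
  - rewrite (sumN_ext _ (fun n => fst (Ee (x * INR (bin_to_tern n))))) by (intros; apply Hcos).
    rewrite <- fst_sumC. fold (Sg x N). rewrite Rminus_0_r.
    unfold Rdiv. rewrite Rabs_mult, (Rabs_pos_eq (/ INR N)) by (left; apply Rinv_0_lt_compat; lra).
    pose proof (re_le_Cmod (Sg x N)). unfold Re in H.
    assert (Rabs (fst (Sg x N)) * / INR N <= Cmod (Sg x N) * / INR N)
      by (apply Rmult_le_compat_r; [left; apply Rinv_0_lt_compat; lra| exact H]).
    unfold Rdiv in HN. lra.
  - rewrite (sumN_ext _ (fun n => snd (Ee (x * INR (bin_to_tern n))))) by (intros; apply Hsin).
    rewrite <- snd_sumC. fold (Sg x N). rewrite Rminus_0_r.
    unfold Rdiv. rewrite Rabs_mult, (Rabs_pos_eq (/ INR N)) by (left; apply Rinv_0_lt_compat; lra).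
    pose proof (im_le_Cmod (Sg x N)).
    assert (Rabs (snd (Sg x N)) * / INR N <= Cmod (Sg x N) * / INR N)
      by (apply Rmult_le_compat_r; [left; apply Rinv_0_lt_compat; lra| exact H]).
    unfold Rdiv in HN. lra.
Qed.

Theorem mainTheorem9 (alpha : R) :
  irrational alpha ->
  equidistributed_mod1 (fun n => alpha * INR (bin_to_tern n)).
Proof.
  intros Hirr a b Ha Hab Hb eps Heps.
  set (v := fun n => frac (alpha * INR (bin_to_tern n))).
  pose proof (weyl_v alpha Hirr) as HW. fold v in HW.
  destruct (weyl_upper v HW a b Ha Hab Hb (eps / 2) ltac:(lra)) as [N1 [_ HN1]].
  destruct (weyl_upper v HW 0 a ltac:(lra) Ha ltac:(lra) (eps / 4) ltac:(lra)) as [N2 [_ HN2]].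
  destruct (weyl_upper v HW b 1 ltac:(lra) Hb ltac:(lra) (eps / 4) ltac:(lra)) as [N3 [_ HN3]].
  exists (Nat.max 1 (Nat.max N1 (Nat.max N2 N3))). intros N HN.
  assert (HNr : 0 < INR N) by (apply lt_0_INR; lia).
  specialize (HN1 N ltac:(lia)). specialize (HN2 N ltac:(lia)). specialize (HN3 N ltac:(lia)).
  rewrite count_sum. fold v.
  assert (Hid : sumN (fun n => indI a b (v n)) N =
                INR N - sumN (fun n => indI 0 a (v n)) N - sumN (fun n => indI b 1 (v n)) N).
  { rewrite <- (Rmult_1_l (INR N)), <- sumN_const.
    assert (sumN (fun _ => 1) N = sumN (fun n => indI a b (v n) + indI 0 a (v n) + indI b 1 (v n)) N).
    { apply sumN_ext. intros m _. symmetry. apply ind_split; auto. apply frac_range. }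
    rewrite H, !sumN_plus. ring. }
  assert (Heq : sumN (fun n => indI a b (v n)) N / INR N =
                1 - sumN (fun n => indI 0 a (v n)) N / INR N - sumN (fun n => indI b 1 (v n)) N / INR N).
  { rewrite Hid. field. lra. }
  unfold R_dist. apply Rabs_def1; lra.
Qed.

Open Scope R_scope.
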